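(* Let $\mathcal{G}$ be a locally finite, one-ended, hyperfinite, measure class preserving measurable graph on a standard probability space $(X,\nu)$, with measurable spanning tree $\mathcal{T}$. Then for $\nu$-a.e. $x$, letting $G$ be the $\mathcal G$-component of $x$ and $T=\mathcal T\cap G$, either $T\setminus\mathrm{Core}_{\mathcal{T}}(\mathcal{G})=T$ or all connected components of $T\setminus\mathrm{Core}_{\mathcal{T}}(\mathcal{G})$ are finite.
   Context: mcp: Borel bijections of $X$ with graph inside the connectedness relation of $\mathcal G$ preserve $\nu$-null sets. Hyperfinite: increasing union of measurable graphs with a.e. finite components. One-ended: a.e. component is one-ended. A measurable spanning tree is a measurable acyclic subgraph with the same components as $\mathcal G$ a.e. A fundamental cycle relative to $\mathcal T$ is a cycle in $\mathcal G$ with exactly one edge not in $\mathcal T$; $\mathrm{Core}_{\mathcal T}(\mathcal G)$ is the set of edges of $\mathcal T$ lying in infinitely many fundamental cycles. *)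

(* Defs.v *)
From HB Require Import structures.
From mathcomp Require Import all_boot all_order all_algebra.
From mathcomp Require Import all_classical all_reals all_analysis.
Set Implicit Arguments. Unset Strict Implicit. Unset Printing Implicit Defensive.
Import Order.TTheory GRing.Theory Num.Theory.
Local Open Scope classical_set_scope.
Local Open Scope ring_scope.

Section Graphs.
Variable X : Type.
Implicit Types (E : X -> X -> Prop) (A : set X).

Definition simple_graph E := (forall x y, E x y -> E y x) /\ (forall x, ~ E x x).

Definition connect_in A E x y :=
  exists (n : nat) (p : nat -> X), p 0%N = x /\ p n = y /\
    (forall i, (i <= n)%N -> A (p i)) /\ (forall i, (i < n)%N -> E (p i) (p i.+1)).

Definition connect E x y := connect_in setT E x y.

Definition gcomp E x : set X := [set y | connect E x y].

Definition locally_finite E := forall x, finite_set [set y | E x y].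

Definition is_cycle E (n : nat) (p : nat -> X) :=
  (3 <= n)%N /\
  (forall i j, (i < n)%N -> (j < n)%N -> p i = p j -> i = j) /\
  (forall i, (i < n)%N -> E (p i) (p (i.+1 %% n)%N)).

Definition cycle_edges (n : nat) (p : nat -> X) : set (X * X) :=
  [set e | exists i, (i < n)%N /\
     (e = (p i, p (i.+1 %% n)%N) \/ e = (p (i.+1 %% n)%N, p i))].

Definition acyclic E := forall n p, ~ is_cycle E n p.

Definition fundamental_cycle E (T : X -> X -> Prop) (C : set (X * X)) :=
  exists n p, is_cycle E n p /\ C = cycle_edges n p /\
    exists a b, [set e | C e /\ ~ T e.1 e.2] = [set (a, b)] `|` [set (b, a)].

Definition core E (T : X -> X -> Prop) : set (X * X) :=
  [set e | T e.1 e.2 /\ infinite_set [set C | fundamental_cycle E T C /\ C e]].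

Definition one_ended_at E x :=
  forall F : set X, finite_set F ->
    let V := gcomp E x `\` F in
    (exists y, V y /\ infinite_set [set z | connect_in V E y z]) /\
    (forall y1 y2, V y1 -> V y2 ->
       infinite_set [set z | connect_in V E y1 z] ->
       infinite_set [set z | connect_in V E y2 z] -> connect_in V E y1 y2).

Definition minus_core E (T : X -> X -> Prop) : X -> X -> Prop :=
  fun u v => T u v /\ ~ core E T (u, v).

End Graphs.

Section Measurable.
Context {d : measure_display} {X : measurableType d} {R : realType}.

(** Standard Borel space, via Kuratowski: Borel isomorphic to a Borel subset of R. *)
Definition standard_borel :=
  exists f : X -> R, measurable_fun setT f /\ injective f /\
    (forall A, measurable A -> measurable (f @` A)).

Definition measurable_graph (E : X -> X -> Prop) :=
  simple_graph E /\ measurable [set p : X * X | E p.1 p.2].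

Variable nu : probability X R.

Definition mcp (E : X -> X -> Prop) :=
  forall f g : X -> X, cancel f g -> cancel g f ->
    measurable_fun setT f -> measurable_fun setT g ->
    (forall x, connect E x (f x)) ->
    forall A, measurable A -> nu A = 0%E -> nu (f @^-1` A) = 0%E.

Definition hyperfinite (E : X -> X -> Prop) :=
  exists Gn : nat -> X -> X -> Prop,
    (forall n, measurable_graph (Gn n)) /\
    (forall n x y, Gn n x y -> Gn n.+1 x y) /\
    (forall x y, E x y <-> exists n, Gn n x y) /\
    (forall n, {ae nu, forall x, finite_set (gcomp (Gn n) x)}).

Definition one_ended (E : X -> X -> Prop) := {ae nu, forall x, one_ended_at E x}.

Definition measurable_spanning_tree (E T : X -> X -> Prop) :=
  measurable_graph T /\ (forall x y, T x y -> E x y) /\ acyclic T /\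
  {ae nu, forall x, gcomp T x = gcomp E x}.

End Measurable.

(* Main.v *)
Require Import Defs.
From mathcomp Require Import all_boot all_order all_algebra.
From mathcomp Require Import all_classical all_reals all_analysis.
From mathcomp Require Import zify.
Set Implicit Arguments. Unset Strict Implicit.
Local Open Scope classical_set_scope.

Section Paths.
Variable X : Type.
Implicit Types (R : X -> X -> Prop) (A : set X).

Lemma ci_refl A R x : A x -> connect_in A R x x.
Proof. by move=> Ax; exists 0%N, (fun _ => x); do !split => // i; rewrite ?leqn0 ?ltn0. Qed.

Lemma ci_mono A B R R' x y : (forall z, A z -> B z) -> (forall a b, R a b -> R' a b) ->
  connect_in A R x y -> connect_in B R' x y.
Proof.
move=> AB RR [n [p [p0 [pn [pA pR]]]]]; exists n, p; do !split => //.
- by move=> i /pA /AB.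
- by move=> i /pR /RR.
Qed.

Lemma ci_trans A R x y z : connect_in A R x y -> connect_in A R y z -> connect_in A R x z.
Proof.
move=> [n1 [p1 [p10 [p1n [p1A p1R]]]]] [n2 [p2 [p20 [p2n [p2A p2R]]]]].
exists (n1 + n2)%N, (fun k => if (k <= n1)%N then p1 k else p2 (k - n1)%N).
split; first by rewrite leq0n.
split.
  case: ifP => h; last by rewrite addKn.
  have e : n2 = 0%N by lia.
  by subst n2; rewrite addn0 p1n -p20.
split.
  move=> i hi /=; case: ifP => h; first exact: p1A.
  by apply: p2A; lia.
move=> i hi /=; case: (ltngtP i n1) => h.
- by apply: p1R.
- have -> : (i.+1 - n1 = (i - n1).+1)%N by lia.
  by apply: p2R; lia.
- subst i; rewrite p1n subSnn -p20; apply: p2R; lia.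
Qed.

Lemma ci_sym A R x y : (forall a b, R a b -> R b a) -> connect_in A R x y -> connect_in A R y x.
Proof.
move=> Rs [n [p [p0 [pn [pA pR]]]]]; exists n, (fun k => p (n - k)%N).
split; first by rewrite subn0.
split; first by rewrite subnn.
split; first by move=> i hi; apply: pA; lia.
move=> i hi; apply: Rs; have -> : (n - i = (n - i.+1).+1)%N by lia.
by apply: pR; lia.
Qed.

Lemma ci_step A R x y z : connect_in A R x y -> A z -> R y z -> connect_in A R x z.
Proof.
move=> cxy Az Ryz; apply: (ci_trans cxy).
have Ay : A y by case: cxy => n [p [_ [<- [pA _]]]]; exact: pA.
exists 1%N, (fun k => if k == 0%N then y else z); do !split => //.
- by case => [|[|]].
- by case => [|].
Qed.

Lemma ci_prefix A R n p k : (forall i, (i <= n)%N -> A (p i)) ->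
  (forall i, (i < n)%N -> R (p i) (p i.+1)) -> (k <= n)%N -> connect_in A R (p 0%N) (p k).
Proof.
move=> pA pR kn; exists k, p; split; first by []; split; first by [].
split => i hi; [apply: pA | apply: pR]; lia.
Qed.

Lemma ci_suffix A R n p k : (forall i, (i <= n)%N -> A (p i)) ->
  (forall i, (i < n)%N -> R (p i) (p i.+1)) -> (k <= n)%N -> connect_in A R (p k) (p n).
Proof.
move=> pA pR kn; exists (n - k)%N, (fun i => p (k + i)%N); do !split.
- by rewrite addn0.
- by congr p; lia.
- by move=> i hi; apply: pA; lia.
- by move=> i hi; rewrite addnS; apply: pR; lia.
Qed.

Lemma first_exit (P : set X) n p : P (p 0%N) -> ~ P (p n) ->
  exists k, (k < n)%N /\ (forall i, (i <= k)%N -> P (p i)) /\ ~ P (p k.+1).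
Proof.
move=> P0 Pn.
have ex : exists m, (fun m => `[< ~ P (p m) >]) m by exists n; apply/asboolP.
case: (ex_minnP ex) => m /asboolP Pm mmin.
have m0 : m <> 0%N by move=> m0; subst m.
exists m.-1; split.
  have : (m <= n)%N by apply: mmin; apply/asboolP.
  lia.
split; last by have -> : (m.-1.+1 = m) by lia.
move=> i hi; apply: contrapT => Pi.
have : (m <= i)%N by apply: mmin; apply/asboolP.
lia.
Qed.

Lemma ci_short A R x y : connect_in A R x y ->
  exists n p, p 0%N = x /\ p n = y /\ (forall i, (i <= n)%N -> A (p i)) /\
    (forall i, (i < n)%N -> R (p i) (p i.+1)) /\
    (forall i j, (i <= n)%N -> (j <= n)%N -> p i = p j -> i = j).
Proof.
move=> cxy.
pose Q m := exists p, p 0%N = x /\ p m = y /\ (forall i, (i <= m)%N -> A (p i)) /\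
    (forall i, (i < m)%N -> R (p i) (p i.+1)).
have ex : exists m, (fun m => `[< Q m >]) m.
  by case: cxy => n [p h]; exists n; apply/asboolP; exists p.
case: (ex_minnP ex) => n /asboolP [p [p0 [pn [pA pR]]]] nmin.
exists n, p; do !split => //.
suff H : forall i j, (i < j)%N -> (j <= n)%N -> p i = p j -> False.
  move=> i j hi hj pij; case: (ltngtP i j) => // h.
  - by case: (H _ _ h hj pij).
  - by case: (H _ _ h hi (esym pij)).
move=> i j ij jn pij.
have : (n <= n - (j - i))%N.
  apply: nmin; apply/asboolP.
  exists (fun k => if (k <= i)%N then p k else p (k + (j - i))%N).
  split; first by rewrite leq0n.
  split.
    case: ifP => h; last by rewrite subnK; [|lia].
    have -> : (n - (j - i) = i)%N by lia.
    have e : j = n by lia.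
    by rewrite pij e.
  split.
    by move=> k hk; case: ifP => h; apply: pA; lia.
  move=> k hk; case: (ltngtP k i) => h.
  - by apply: pR; lia.
  - rewrite addSn; apply: pR; lia.
  - subst k; have -> : (i.+1 + (j - i) = j.+1)%N by lia.
    by rewrite pij; apply: pR; lia.
lia.
Qed.

End Paths.

Definition Tm (X : Type) (T : X -> X -> Prop) u v a b :=
  T a b /\ ~ (a = u /\ b = v) /\ ~ (a = v /\ b = u).
Definition side (X : Type) (T : X -> X -> Prop) u v w z := Defs.connect (Tm T u v) w z.

Section Sides.
Variable X : Type.
Variable T : X -> X -> Prop.
Hypothesis Tsym : forall a b, T a b -> T b a.
Hypothesis Tirr : forall a, ~ T a a.
Hypothesis Tac : Defs.acyclic T.

Lemma Tm_sym u v a b : Tm T u v a b -> Tm T u v b a.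
Proof. by move=> [Tab [h1 h2]]; split; [exact: Tsym|split=> -[]*; [apply: h2|apply: h1]]. Qed.

Lemma Tm_swap u v a b : Tm T u v a b -> Tm T v u a b.
Proof. by move=> [Tab [h1 h2]]; split. Qed.

Lemma Tm_T u v a b : Tm T u v a b -> T a b.
Proof. by case. Qed.

Lemma side_swap u v w z : side T u v w z -> side T v u w z.
Proof. exact: ci_mono (fun _ h => h) (@Tm_swap u v). Qed.

Lemma side_T u v w z : side T u v w z -> Defs.connect T w z.
Proof. exact: ci_mono (fun _ h => h) (@Tm_T u v). Qed.

Lemma side_sym u v w z : side T u v w z -> side T u v z w.
Proof. exact: ci_sym (@Tm_sym u v). Qed.

Lemma side_trans u v w y z : side T u v w y -> side T u v y z -> side T u v w z.
Proof. exact: ci_trans. Qed.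

Lemma side_refl u v w : side T u v w w.
Proof. exact: ci_refl. Qed.

Lemma sideN u v : T u v -> ~ side T u v u v.
Proof.
move=> Tuv hs; case: (ci_short hs) => n [p [p0 [pn [_ [pR pinj]]]]].
case: n pn pR pinj => [|[|n]] pn pR pinj.
- by subst; apply: (Tirr Tuv).
- by case: (pR 0%N isT) => _ [h _]; apply: h; rewrite p0 pn.
apply: (Tac (n := n.+3) (p := p)); split => //; split.
  by move=> i j hi hj; apply: pinj.
move=> i hi; case: (ltnP i n.+2) => h.
  by rewrite modn_small //; apply: Tm_T (pR _ h).
have -> : i = n.+2 by lia.
by rewrite modnn p0 pn; apply: Tsym.
Qed.

Lemma side_disj u v z : T u v -> side T u v u z -> side T u v v z -> False.
Proof.
move=> Tuv h1 h2; apply: (sideN Tuv); exact: side_trans h1 (side_sym h2).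
Qed.

Lemma side_cover u v w : T u v -> Defs.connect T u w -> side T u v u w \/ side T u v v w.
Proof.
move=> Tuv [n [p [p0 [pn [_ pR]]]]]; rewrite -pn.
suff H : forall k, (k <= n)%N -> side T u v u (p k) \/ side T u v v (p k) by apply: H.
elim => [|k IH] hk; first by rewrite p0; left; exact: side_refl.
have Tk := pR k hk.
case: (pselect (Tm T u v (p k) (p k.+1))) => hm.
  case: (IH (ltnW hk)) => h; [left|right]; exact: ci_step h I hm.
have : (p k = u /\ p k.+1 = v) \/ (p k = v /\ p k.+1 = u).
  apply: contrapT => hn; apply: hm; split => //; split => h; apply: hn; [left|right] => //.
case=> -[_ ->]; [right|left]; exact: side_refl.
Qed.

Lemma side_edge u v a b : T u v -> T a b -> side T u v u a -> side T u v v b -> a = u /\ b = v.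
Proof.
move=> Tuv Tab ha hb.
case: (pselect (Tm T u v a b)) => hm.
  by case: (side_disj Tuv (ci_step ha I hm) hb).
have : (a = u /\ b = v) \/ (a = v /\ b = u).
  apply: contrapT => hn; apply: hm; split => //; split => h; apply: hn; [left|right] => //.
case=> // -[ea eb]; subst a b.
by case: (side_disj Tuv ha (side_refl _ _ _)).
Qed.

Lemma side_cross u v n p : T u v -> (forall i, (i < n)%N -> T (p i) (p i.+1)) ->
  side T u v u (p 0%N) -> side T u v v (p n) -> exists k, (k < n)%N /\ p k = u /\ p k.+1 = v.
Proof.
move=> Tuv pR h0 hn.
have nu : ~ side T u v u (p n) by move=> h; exact: side_disj Tuv h hn.
case: (first_exit h0 nu) => k [kn [hpre hk]].
have ck : Defs.connect T u (p k.+1).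
  apply: ci_trans (side_T h0) _.
  by apply: (@ci_prefix _ _ _ n) => // i _.
case: (side_cover Tuv ck) => // hv.
case: (side_edge Tuv (pR _ kn) (hpre k (leqnn k)) hv) => e1 e2.
by exists k.
Qed.

End Sides.
Definition idx (n j i : nat) := if j.+1 + i < n then j.+1 + i else j.+1 + i - n.
Lemma nxt_mod r n : r < n -> r.+1 %% n = if r.+1 < n then r.+1 else 0.
Proof. move=> h; case: ifP => h2; [by rewrite modn_small | ]. have ->: r.+1 = n by lia. by rewrite modnn. Qed.
Lemma idx_lt n j i : j < n -> i <= n.-1 -> idx n j i < n.
Proof. rewrite /idx; intros; case: ifP => h; lia. Qed.
Lemma idx_inj n j i k : j < n -> i <= n.-1 -> k <= n.-1 -> idx n j i = idx n j k -> i = k.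
Proof. rewrite /idx => a1 a2 a3; case: ifP => h1; case: ifP => h2; lia. Qed.
Lemma idx0 n j : j < n -> idx n j 0 = j.+1 %% n.
Proof. move=> h; rewrite nxt_mod // /idx addn0; case: ifP => h2; lia. Qed.
Lemma idx_last n j : j < n -> idx n j n.-1 = j.
Proof. rewrite /idx; intros; case: ifP => h; lia. Qed.
Lemma idxS n j i : j < n -> i < n.-1 -> idx n j i.+1 = (idx n j i).+1 %% n.
Proof. move=> h hi; rewrite nxt_mod; last by apply: idx_lt; lia.
rewrite /idx; case: (ltnP (j.+1+i) n) => a; case: (ltnP (j.+1 + i.+1) n) => b; case: ifP => c; lia. Qed.
Lemma idx_neq n j i : j < n -> i < n.-1 -> idx n j i <> j.
Proof. rewrite /idx; intros; case: ifP => h; lia. Qed.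
Lemma idx_surj n j r : j < n -> r < n -> r <> j -> exists i, i < n.-1 /\ idx n j i = r.
Proof.
move=> hj hr hrj; rewrite /idx.
case: (ltnP j r) => h.
  exists (r - j.+1); split; first lia. rewrite ifT; lia.
exists (r + n - j.+1); split; first lia. rewrite ifF; lia.
Qed.
Lemma two_cycle n r j : 3 <= n -> r < n -> j < n -> r.+1 %% n = j -> j.+1 %% n = r -> False.
Proof. move=> h hr hj; rewrite !nxt_mod //; case: ifP => h1; case: ifP => h2; lia. Qed.

Section Rotate.
Variable X : Type.
Variables E T : X -> X -> Prop.

Lemma rotate n p a b : is_cycle E n p ->
  [set e | cycle_edges n p e /\ ~ T e.1 e.2] = [set (a, b)] `|` [set (b, a)] ->
  exists m q, (2 <= m)%N /\ (forall i, (i < m)%N -> T (q i) (q i.+1)) /\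
   (forall i j, (i <= m)%N -> (j <= m)%N -> q i = q j -> i = j) /\
   ((q 0%N = a /\ q m = b) \/ (q 0%N = b /\ q m = a)) /\
   (forall i, (i < m)%N -> cycle_edges n p (q i, q i.+1)) /\
   (forall e, cycle_edges n p e -> T e.1 e.2 ->
      exists i, (i < m)%N /\ (e = (q i, q i.+1) \/ e = (q i.+1, q i))).
Proof.
move=> [n3 [pinj pE]] NT.
have : [set e | cycle_edges n p e /\ ~ T e.1 e.2] (a, b) by rewrite NT; left.
move=> [[j [jn hj]] nTab].
have n0 : (0 < n)%N by lia.
have j'n : (j.+1 %% n < n)%N by rewrite ltn_mod.
exists n.-1, (fun i => p (idx n j i)).
have idxn : forall i, (i <= n.-1)%N -> (idx n j i < n)%N by move=> i hi; exact: idx_lt.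
have Cq : forall i, (i < n.-1)%N -> cycle_edges n p (p (idx n j i), p (idx n j i.+1)).
  move=> i hi; exists (idx n j i); split; first by apply: idxn; lia.
  by left; rewrite idxS.
split; first by lia.
split.
  move=> i hi; apply: contrapT => nT.
  have : [set e | cycle_edges n p e /\ ~ T e.1 e.2] (p (idx n j i), p (idx n j i.+1)).
    by split; [exact: Cq|].
  have ri := idxn _ (ltnW hi).
  have ri' : ((idx n j i).+1 %% n < n)%N by rewrite ltn_mod.
  rewrite NT idxS // => -[] /pair_equal_spec [e1 e2];
  case: hj => /pair_equal_spec [ea eb]; rewrite ea eb in e1 e2.
  all: try by apply: (idx_neq jn hi); apply: pinj.
  1,2: apply: (two_cycle n3 ri jn); apply: pinj => //; by rewrite ?e1 ?e2.
split.
  move=> i k hi hk /pinj h; apply: (idx_inj jn hi hk); apply: h; exact: idxn.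
split.
  rewrite idx0 // idx_last //.
  by case: hj => /pair_equal_spec [-> ->]; [right|left].
split; first exact: Cq.
move=> e [r [rn hr]] Te.
case: (pselect (r = j)) => rj.
  subst r; exfalso.
  have : [set e | cycle_edges n p e /\ ~ T e.1 e.2] e.
    rewrite NT; case: hj => /pair_equal_spec [ea eb]; case: hr => ->; rewrite ?ea ?eb;
    by [left|right].
  by case.
case: (idx_surj jn rn rj) => i [hi hir].
exists i; split => //.
by rewrite idxS // hir.
Qed.

End Rotate.

Lemma ci_seg (X : Type) (R : X -> X -> Prop) (p : nat -> X) k l : (k <= l)%N ->
  (forall i, (k <= i)%N -> (i < l)%N -> R (p i) (p i.+1)) -> Defs.connect R (p k) (p l).
Proof.
move=> kl pR; exists (l - k)%N, (fun i => p (k + i)%N); do !split.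
- by rewrite addn0.
- by congr p; lia.
- by move=> i hi; rewrite addnS; apply: pR; lia.
Qed.

Lemma cycle_edges_sym (X : Type) n (p : nat -> X) x y :
  cycle_edges n p (x, y) -> cycle_edges n p (y, x).
Proof.
move=> [i [hi h]]; exists i; split => //.
by case: h => /pair_equal_spec [-> ->]; [right|left].
Qed.

Section Fund.
Variable X : Type.
Variables E T : X -> X -> Prop.
Hypothesis Esym : forall a b, E a b -> E b a.
Hypothesis Eirr : forall a, ~ E a a.
Hypothesis Tsym : forall a b, T a b -> T b a.
Hypothesis Tirr : forall a, ~ T a a.
Hypothesis Tac : Defs.acyclic T.
Hypothesis TE : forall a b, T a b -> E a b.

Definition sep u v a b :=
  (side T u v u a /\ side T u v v b) \/ (side T u v v a /\ side T u v u b).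

Definition Dset a b : set (X * X) :=
  [set e | e = (a, b) \/ e = (b, a) \/ (T e.1 e.2 /\ sep e.1 e.2 a b)].

Lemma path_sides m q i : (forall k, (k < m)%N -> T (q k) (q k.+1)) ->
  (forall k l, (k <= m)%N -> (l <= m)%N -> q k = q l -> k = l) -> (i < m)%N ->
  side T (q i) (q i.+1) (q i) (q 0%N) /\ side T (q i) (q i.+1) (q i.+1) (q m).
Proof.
move=> qT qinj im; split.
  apply: side_sym => //.
  apply: (ci_seg (leq0n i)) => k _ ki; split; first by apply: qT; lia.
  split=> -[h1 h2].
  - by move: (qinj _ _ (ltnW (ltn_trans ki im)) (ltnW im) h1); lia.
  - by move: (qinj _ _ (ltnW (ltn_trans ki im)) im h1); lia.
apply: (ci_seg im) => k h1 h2; split; first exact: qT.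
split=> -[e1 e2].
- by move: (qinj _ _ (ltnW h2) (ltnW im) e1); lia.
- by move: (qinj _ _ h2 (ltnW im) e2); lia.
Qed.

Lemma fund_char n p a b : is_cycle E n p ->
  [set e | cycle_edges n p e /\ ~ T e.1 e.2] = [set (a, b)] `|` [set (b, a)] ->
  cycle_edges n p = Dset a b.
Proof.
move=> cyc NT.
have NTe : forall e, cycle_edges n p e -> ~ T e.1 e.2 -> e = (a, b) \/ e = (b, a).
  by move=> e h1 h2; have : [set e | cycle_edges n p e /\ ~ T e.1 e.2] e by [];
     rewrite NT.
have Cab : cycle_edges n p (a, b) /\ cycle_edges n p (b, a).
  have h1 : [set e | cycle_edges n p e /\ ~ T e.1 e.2] (a, b) by rewrite NT; left.
  have h2 : [set e | cycle_edges n p e /\ ~ T e.1 e.2] (b, a) by rewrite NT; right.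
  by split; [case: h1|case: h2].
case: (rotate cyc NT) => m [q [m2 [qT [qinj [qends [qC qall]]]]]].
apply/seteqP; split => e.
  move=> Ce; case: (pselect (T e.1 e.2)) => Te; last first.
    by case: (NTe e Ce Te) => ->; [left|right; left].
  right; right; split => //.
  case: (qall e Ce Te) => i [im he].
  have [s0 sm] := path_sides qT qinj im.
  case: he => ->; rewrite /sep /=.
  - by case: qends => -[<- <-]; [left|right].
  - have s0' := side_swap s0; have sm' := side_swap sm.
    by case: qends => -[<- <-]; [right|left].
case=> [->|[->|[Te hs]]]; first (by case: Cab); first (by case: Cab).
case: e Te hs => u v /= Tuv hs.
have qT' : forall k, (k < m)%N -> T (q k) (q k.+1) by [].
case: hs => -[h1 h2]; case: qends => -[e0 em].
all: rewrite -?e0 -?em in h1 h2.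
all: first
  [ have [k [km [ek ek1]]] := side_cross Tsym Tirr Tac Tuv qT' h1 h2;
    by rewrite -ek -ek1; apply: qC
  | have [k [km [ek ek1]]] := side_cross Tsym Tirr Tac Tuv qT' h2 h1;
    by rewrite -ek -ek1; apply: qC
  | have [k [km [ek ek1]]] := side_cross Tsym Tirr Tac (Tsym Tuv) qT' (side_swap h2) (side_swap h1);
    by apply: cycle_edges_sym; rewrite -ek -ek1; apply: qC
  | have [k [km [ek ek1]]] := side_cross Tsym Tirr Tac (Tsym Tuv) qT' (side_swap h1) (side_swap h2);
    by apply: cycle_edges_sym; rewrite -ek -ek1; apply: qC ].
Qed.

Lemma Dset_sym a b : Dset a b = Dset b a.
Proof.
apply/seteqP; split => e [h|[h|[Te hs]]]; try by [right;left|left].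
- by right; right; split => //; case: hs => -[]; [right|left].
- by right; right; split => //; case: hs => -[]; [right|left].
Qed.

Lemma fund_sep C u v : fundamental_cycle E T C -> C (u, v) -> T u v ->
  exists a b, [set e | C e /\ ~ T e.1 e.2] = [set (a, b)] `|` [set (b, a)] /\
    C = Dset a b /\ sep u v a b /\ E a b.
Proof.
move=> [n [p [cyc [-> [a [b NT]]]]]] Cuv Tuv.
have CD := fund_char cyc NT.
exists a, b; split => //; split => //.
have h1 : [set e | cycle_edges n p e /\ ~ T e.1 e.2] (a, b) by rewrite NT; left.
case: h1 => [[i [hi he]] nT]; split; last first.
  case: cyc => _ [_ pE]; have := pE i hi.
  by case: he => /pair_equal_spec [-> ->] // /Esym.
move: Cuv; rewrite CD => -[/pair_equal_spec [e1 e2]|[/pair_equal_spec [e1 e2]|[_ //]]].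
- by exfalso; apply: nT; rewrite /= -e1 -e2.
- by exfalso; apply: nT; apply: Tsym; rewrite /= -e1 -e2.
Qed.

Hypothesis Elf : locally_finite E.

Lemma core_side_inf u v : T u v ->
  infinite_set [set C | fundamental_cycle E T C /\ C (u, v)] ->
  infinite_set (side T u v u).
Proof.
move=> Tuv inf fin; apply: inf.
pose P := \bigcup_(a in side T u v u) ((fun b => (a, b)) @` [set b | E a b]).
have Pfin : finite_set P.
  by apply: bigcup_finite => // a _; apply: finite_image; apply: Elf.
apply: (sub_finite_set _ (finite_image (fun ab => Dset ab.1 ab.2) Pfin)).
move=> C [fC Cuv].
have [a [b [NT [CD [hs Eab]]]]] := fund_sep fC Cuv Tuv.
case: hs => -[h1 h2].
- by exists (a, b); [exists a => //; exists b|].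
- exists (b, a); [exists b => //; exists a => //; exact: Esym|].
  by rewrite /= -Dset_sym.
Qed.

End Fund.

Lemma LK (X : Type) (R : X -> X -> Prop) (S F : set X) s0 :
  (forall a b, R a b -> R b a) -> locally_finite R -> S s0 ->
  (forall z, S z -> connect_in S R s0 z) -> infinite_set S -> finite_set F ->
  exists y, (S `\` F) y /\ infinite_set [set z | connect_in (S `\` F) R y z].
Proof.
move=> Rs Rlf Ss0 Sc Sinf Ffin; apply: contrapT => H.
have H' : forall y, (S `\` F) y -> finite_set [set z | connect_in (S `\` F) R y z].
  move=> y hy; apply: contrapT => hinf; apply: H; by exists y.
apply: Sinf.
have SD : finite_set (S `\` F).
  case: (pselect (exists f, S f /\ F f)) => [[f0 [Sf0 Ff0]]|nSF]; last first.
    have Fs0 : ~ F s0 by move=> h; apply: nSF; exists s0.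
    apply: (sub_finite_set _ (H' s0 (conj Ss0 Fs0))) => z [Sz Fz].
    apply: ci_mono (Sc z Sz) => // w Sw; split => // Fw; apply: nSF; by exists w.
  pose N := [set w | (S `\` F) w /\ exists f, F f /\ R f w].
  have Nfin : finite_set N.
    apply: (sub_finite_set _ (bigcup_finite Ffin (fun f _ => Rlf f))).
    by move=> w [_ [f [Ff Rfw]]]; exists f.
  apply: (sub_finite_set _ (bigcup_finite Nfin (fun w hw => H' w hw.1))).
  move=> z [Sz Fz].
  have : connect_in S R z f0 := ci_trans (ci_sym Rs (Sc z Sz)) (Sc f0 Sf0).
  move=> [n [r [r0 [rn [rS rR]]]]].
  have P0 : ~ F (r 0%N) by rewrite r0.
  have Pn : ~ ~ F (r n) by rewrite rn.
  have [k [kn [hpre hk]]] := @first_exit _ (fun w => ~ F w) n r P0 Pn.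
  have Fk : F (r k.+1) by apply: contrapT.
  exists (r k).
    split; first by split; [apply: rS; lia | apply: hpre].
    by exists (r k.+1); split => //; apply: Rs; apply: rR.
  rewrite /= -r0; apply: ci_sym => //.
  apply: (@ci_prefix _ _ _ k) => // i hi; last by apply: rR; lia.
  by split; [apply: rS; lia| apply: hpre].
have U : finite_set ((S `\` F) `|` F) by rewrite finite_setU.
apply: (sub_finite_set _ U).
by move=> z Sz; case: (pselect (F z)) => h; [right|left].
Qed.

Section Main.
Variable X : Type.
Variables E T : X -> X -> Prop.
Hypothesis Esym : forall a b, E a b -> E b a.
Hypothesis Eirr : forall a, ~ E a a.
Hypothesis Tsym : forall a b, T a b -> T b a.
Hypothesis Tirr : forall a, ~ T a a.
Hypothesis Tac : Defs.acyclic T.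
Hypothesis TE : forall a b, T a b -> E a b.
Hypothesis Elf : locally_finite E.

Lemma cross_cycle u v a b : T u v -> side T u v u a -> side T u v v b -> E a b -> ~ T a b ->
  exists C, fundamental_cycle E T C /\ C (u, v) /\
    [set e | C e /\ ~ T e.1 e.2] = [set (a, b)] `|` [set (b, a)].
Proof.
move=> Tuv ha hb Eab nTab.
have cba : Defs.connect T b a.
  apply: ci_trans (ci_sym Tsym (side_T hb)) _.
  apply: (ci_trans _ (side_T ha)).
  by apply: (@ci_step _ _ _ _ v) => //; [exact: ci_refl|exact: Tsym].
have [m [q [q0 [qm [_ [qT qinj]]]]]] := ci_short cba.
have m2 : (2 <= m)%N.
  case: m qm qT qinj => [|[|m]] qm qT qinj //.
  - have e : b = a by rewrite -q0 -qm.
    by move: Eab; rewrite -e => /Eirr.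
  - by exfalso; apply: nTab; apply: Tsym; rewrite -q0 -qm; apply: qT.
have NT : [set e | cycle_edges m.+1 q e /\ ~ T e.1 e.2] = [set (a, b)] `|` [set (b, a)].
  apply/seteqP; split.
    move=> e [[i [hi he]] nT]; case: (ltnP i m) => h.
      exfalso; apply: nT; rewrite modn_small in he; last by [].
      by case: he => ->; [apply: qT| apply: Tsym; apply: qT].
    have ei : i = m by lia.
    by move: he; rewrite ei modnn q0 qm => -[] ->; [left|right].
  move=> e [] ->; (split; [exists m; split => //; rewrite modnn q0 qm|]).
  - by left.
  - by [].
  - by right.
  - by move/Tsym.
exists (cycle_edges m.+1 q); split.
  exists m.+1, q; split; last by split => //; exists a, b.
  split; first by lia.
  split; first by move=> i j hi hj; apply: qinj; lia.
  move=> i hi; case: (ltnP i m) => h.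
    by rewrite modn_small //; apply: TE; apply: qT.
  have ei : i = m by lia.
  by rewrite ei modnn q0 qm.
split => //.
have [k [km [ek ek1]]] := side_cross Tsym Tirr Tac (Tsym Tuv) (n := m) (p := q) qT
  (eq_ind_r _ (side_swap hb) q0) (eq_ind_r _ (side_swap ha) qm).
exists k; split; first by lia.
by right; rewrite modn_small ?ek ?ek1 //; lia.
Qed.

Lemma side_in u v w z : side T u v w z -> connect_in (side T u v w) E w z.
Proof.
move=> [n [p [p0 [pn [_ pR]]]]]; exists n, p; do !split => //.
- move=> i hi; rewrite /side -p0.
  by apply: (@ci_prefix _ _ _ n) => // j _; apply: pR.
- by move=> i hi; apply: TE; case: (pR i hi).
Qed.

Lemma noncore_side x u v : T u v ->
  finite_set [set C | fundamental_cycle E T C /\ C (u, v)] ->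
  one_ended_at E x -> gcomp T x = gcomp E x -> gcomp E x u ->
  finite_set (side T u v u) \/ finite_set (side T u v v).
Proof.
move=> Tuv ffin oe hG Gu; apply: contrapT => nb.
have infu : infinite_set (side T u v u) by move=> h; apply: nb; left.
have infv : infinite_set (side T u v v) by move=> h; apply: nb; right.
pose Xc := [set ab | side T u v u ab.1 /\ side T u v v ab.2 /\ E ab.1 ab.2 /\ ~ T ab.1 ab.2].
have Xcfin : finite_set Xc.
  apply: (sub_finite_set _ (bigcup_finite ffin (F := fun C => [set e | C e /\ ~ T e.1 e.2]) _)).
    move=> [a b] [ha [hb [Eab nTab]]].
    have [C [fC [Cuv NT]]] := cross_cycle Tuv ha hb Eab nTab.
    by exists C => //; rewrite NT; left.
  move=> C [[n [p [_ [_ [a [b ->]]]]]] _].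
  by rewrite finite_setU; split; apply: finite_set1.
pose F := fst @` Xc `|` snd @` Xc `|` [set u] `|` [set v].
have Ffin : finite_set F.
  by rewrite !finite_setU; do !split; try apply: finite_image; try apply: finite_set1.
have [[_ _] uniq] := (oe F Ffin).
pose V := gcomp E x `\` F.
have GT : forall w, gcomp E x w -> Defs.connect T u w.
  move=> w Gw.
  have h1 : gcomp T x w by rewrite hG.
  have h2 : gcomp T x u by rewrite hG.
  exact: ci_trans (ci_sym Tsym h2) h1.
have SG : forall w s, (s = u \/ s = v) -> side T u v s w -> gcomp E x w.
  move=> w s hs hw; rewrite /gcomp /=.
  apply: ci_trans Gu _.
  apply: (ci_mono (R := T) (fun z h => h) TE).
  case: hs => es; rewrite es in hw; first exact: side_T hw.
  apply: (ci_trans _ (side_T hw)); apply: (@ci_step _ _ _ _ u) => //; exact: ci_refl.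
have key : forall s, (s = u \/ s = v) -> infinite_set (side T u v s) ->
    exists y, V y /\ side T u v s y /\ infinite_set [set z | connect_in V E y z].
  move=> s hs inf.
  have Ss : side T u v s s by exact: side_refl.
  have [y [[Sy Fy] yinf]] := LK Esym Elf Ss (fun z => @side_in u v s z) inf Ffin.
  exists y; split; first by split => //; exact: SG hs Sy.
  split => //.
  apply: sub_infinite_set yinf => z; apply: ci_mono => // w [Sw Fw]; split => //.
  exact: SG hs Sw.
have [y1 [Vy1 [S1 inf1]]] := key u (or_introl erefl) infu.
have [y2 [Vy2 [S2 inf2]]] := key v (or_intror erefl) infv.
have [n [r [r0 [rn [rV rE]]]]] := uniq y1 y2 Vy1 Vy2 inf1 inf2.
have P0 : side T u v u (r 0%N) by rewrite r0.
have Pn : ~ side T u v u (r n) by rewrite rn => h; have := side_disj Tsym Tirr Tac Tuv h; apply.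
have [k [kn [hpre hk]]] := @first_exit _ (side T u v u) n r P0 Pn.
have Vk1 := rV k.+1 kn.
have Vk := rV k (ltnW kn).
have hv : side T u v v (r k.+1).
  by case: (side_cover Tuv (GT _ Vk1.1)) => // h; case: hk.
have hu := hpre k (leqnn k).
case: (pselect (T (r k) (r k.+1))) => Tk.
  have [e1 _] := side_edge Tsym Tirr Tac Tuv Tk hu hv.
  by apply: Vk.2; left; right; rewrite e1.
apply: Vk.2; left; left; left.
by exists (r k, r k.+1) => //; do !split => //; apply: rE.
Qed.

Lemma fam_sub u v : [set C | fundamental_cycle E T C /\ C (u, v)] `<=`
  [set C | fundamental_cycle E T C /\ C (v, u)].
Proof.
move=> C [fC Cuv]; split => //.
by case: fC Cuv => n [p [_ [eC _]]]; rewrite eC; apply: cycle_edges_sym.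
Qed.

Lemma core_sym u v : core E T (u, v) -> core E T (v, u).
Proof.
move=> [/= Tuv inf]; split; first exact: Tsym.
exact: sub_infinite_set (@fam_sub u v) inf.
Qed.

Lemma mc_sym u v : minus_core E T u v -> minus_core E T v u.
Proof. by move=> [Tuv nc]; split; [exact: Tsym| move/core_sym]. Qed.

Lemma nest u0 v0 t c z : (z = u0 \/ z = v0) -> ~ side T u0 v0 z c ->
  forall w, side T u0 v0 z w -> side T t c z w.
Proof.
move=> hz nc w [n [p [p0 [pn [_ pR]]]]].
exists n, p; split => //; split => //; split => // i hi.
have hpre : forall j, (j <= n)%N -> side T u0 v0 z (p j).
  move=> j hj; rewrite /side -p0.
  by apply: (@ci_prefix _ _ _ n) => // l _; apply: pR.
case: (pR i hi) => Tp _; split => //.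
split=> -[e1 e2]; apply: nc.
- by rewrite -e2; apply: hpre.
- by rewrite -e1; apply: hpre; lia.
Qed.

Lemma comb x : one_ended_at E x -> gcomp T x = gcomp E x ->
  (forall u v, gcomp E x u -> minus_core E T u v = T u v) \/
  (forall y, gcomp E x y -> finite_set (gcomp (minus_core E T) y)).
Proof.
move=> oe hG.
case: (pselect (exists u v, gcomp E x u /\ core E T (u, v))) => hc; last first.
  left => u v Gu; apply/propext; split; first by case.
  by move=> Tuv; split => // hcore; apply: hc; exists u, v.
right; case: hc => u0 [v0 [Gu0 c0]].
have T0 : T u0 v0 by case: c0.
have inf0u : infinite_set (side T u0 v0 u0) by exact: (core_side_inf Esym Tsym Tirr Tac Elf T0 c0.2).
have inf0v : infinite_set (side T u0 v0 v0).
  have := core_side_inf Esym Tsym Tirr Tac Elf (Tsym T0) (core_sym c0).2.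
  by apply: sub_infinite_set => w h; exact: side_swap h.
move=> y Gy; apply: contrapT => Kinf.
pose K := gcomp (minus_core E T) y.
have GT : forall w, gcomp E x w -> Defs.connect T u0 w.
  move=> w Gw.
  have h1 : gcomp T x w by rewrite hG.
  have h2 : gcomp T x u0 by rewrite hG.
  exact: ci_trans (ci_sym Tsym h2) h1.
have KG : forall k, K k -> gcomp E x k.
  move=> k Kk; apply: ci_trans Gy _.
  exact: (ci_mono (R := minus_core E T) (fun _ h => h) (fun a b h => TE h.1) Kk).
have exP : exists m, (fun m => `[< exists k, K k /\ exists p, p 0%N = u0 /\ p m = k /\
      forall i, (i < m)%N -> T (p i) (p i.+1) >]) m.
  case: (GT y Gy) => n [p [p0 [pn [_ pR]]]].
  exists n; apply/asboolP; exists y; split; first exact: ci_refl.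
  by exists p.
case: (ex_minnP exP) => N /asboolP [t [Kt [pt [pt0 [ptN ptT]]]]] Nmin.
have Gt := KG t Kt.
have Kstep : forall c, minus_core E T t c -> K c.
  by move=> c h; apply: (ci_step Kt I h).
have cfin : forall c, minus_core E T t c -> finite_set (side T t c c).
  move=> c [Ttc nc].
  have ffin : finite_set [set C | fundamental_cycle E T C /\ C (t, c)].
    by apply: contrapT => h; apply: nc; split.
  have Stinf : infinite_set (side T t c t).
    have u0t : side T t c t u0.
      case: (side_cover Ttc (ci_sym Tsym (GT t Gt))) => // hu; exfalso.
      have h0 : side T c t c (pt 0%N) by rewrite pt0; exact: side_swap hu.
      have hN : side T c t t (pt N) by rewrite ptN; exact: side_refl.
      have [k [kN [ek ek1]]] := side_cross Tsym Tirr Tac (Tsym Ttc) ptT h0 hN.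
      have : (N <= k)%N.
        apply: Nmin; apply/asboolP; exists c; split; first exact: Kstep.
        by exists pt; split => //; split => // i hi; apply: ptT; lia.
      lia.
    have v0t : side T t c t v0.
      apply: (ci_step u0t I); split => //; split.
      - by move=> [e1 e2]; apply: nc; rewrite -e1 -e2; exact: c0.
      - by move=> [e1 e2]; apply: nc; rewrite -e1 -e2; exact: core_sym c0.
    case: (pselect (side T u0 v0 u0 c)) => hcu.
    - have ncv : ~ side T u0 v0 v0 c by move=> h; have := side_disj Tsym Tirr Tac T0 hcu; apply.
      apply: sub_infinite_set inf0v => w hw.
      apply: (side_trans v0t); apply: (nest t _ ncv hw); by right.
    - apply: sub_infinite_set inf0u => w hw.
      apply: (side_trans u0t); apply: (nest t _ hcu hw); by left.
  by case: (noncore_side Ttc ffin oe hG Gt) => // h; case: Stinf.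
apply: Kinf.
have cover : K `<=` [set t] `|` \bigcup_(c in [set c | minus_core E T t c]) side T t c c.
  move=> k Kk; case: (pselect (k = t)) => kt; first by left.
  right.
  have ctk : Defs.connect (minus_core E T) t k := ci_trans (ci_sym mc_sym Kt) Kk.
  have [m [r [r0 [rm [_ [rR rinj]]]]]] := ci_short ctk.
  have m0 : (0 < m)%N by case: m rm {rR rinj} => // rm; case: kt; rewrite -rm r0.
  exists (r 1%N); first by rewrite /= -r0; apply: rR.
  rewrite /side -rm; apply: (ci_seg m0) => i h1 h2.
  split; first by case: (rR i h2).
  split => -[e1 e2].
  - by move: (rinj i 0%N (ltnW h2) (leq0n m)); rewrite e1 r0 => /(_ erefl); lia.
  - by move: (rinj i.+1 0%N h2 (leq0n m)); rewrite e2 r0 => /(_ erefl); lia.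
apply: (sub_finite_set cover).
rewrite finite_setU; split; first exact: finite_set1.
apply: bigcup_finite; last by move=> c; apply: cfin.
by apply: (sub_finite_set _ (Elf t)) => c [Ttc _]; apply: TE.
Qed.

End Main.

Theorem lemma3p17 (d : measure_display) (X : measurableType d) (R : realType)
  (nu : probability X R) (E T : X -> X -> Prop) :
  @standard_borel d X R ->
  measurable_graph E -> locally_finite E -> one_ended nu E ->
  hyperfinite nu E -> mcp nu E -> measurable_spanning_tree nu E T ->
  {ae nu, forall x,
    (forall u v, gcomp E x u -> minus_core E T u v = T u v) \/
    (forall y, gcomp E x y -> finite_set (gcomp (minus_core E T) y))}.
Proof.
move=> _ [[Esym Eirr] _] lfE oe _ _ [[[Tsym Tirr] _] [TE [acT spT]]].
move: oe spT; apply: filterS2 => x o s.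
exact: (comb Esym Eirr Tsym Tirr acT TE lfE o s).
Qed.
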